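(* Let $G$ be a finite group, $V$ an irreducible $\mathbb{F}G$-module, and $P<G$ a subgroup such that: (i) $\dim\mathrm{End}_P(V{\downarrow}_P)\geq2$; (ii) the module $W:=(1_P){\uparrow}^G$ is either a direct sum $1_G\oplus A$ or a uniserial module with composition factors $1_G,A,1_G$ (from top to bottom), where $A\not\cong1_G$. Then for any subgroup $H\leq G$, either $G=HP$ or $V{\downarrow}_H$ is reducible.
   Context: $\mathbb{F}$ is an algebraically closed field; $1_X$ denotes the trivial module of a group $X$. *)

(* Defs.v *)
From HB Require Import structures.
From mathcomp Require Import all_boot all_order all_algebra all_fingroup all_solvable all_field all_character.
Set Implicit Arguments. Unset Strict Implicit. Unset Printing Implicit Defensive.
Import GRing.Theory.
Local Open Scope ring_scope.

Section Defs.
Variable F : fieldType.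
Variable gT : finGroupType.

Section Triv.
Variable G : {group gT}.
Lemma triv_mx_repr : mx_repr G (fun _ : gT => (1%:M : 'M[F]_1)).
Proof. by split=> // x y _ _; rewrite mul1mx. Qed.
Definition triv_repr : mx_representation F G 1 := MxRepresentation triv_mx_repr.
End Triv.

(* The induced module (1_P)^G, realised as the permutation module on the
   right cosets P g (g in G), with G acting by right multiplication
   (row-vector convention: row i of ind1_mx x is the image of the basis
   vector of the i-th coset). *)
Section Ind.
Variables G P : {group gT}.
Local Notation m := #|rcosets P G|.

Definition ind1_mx (x : gT) : 'M[F]_m :=
  \matrix_(i < m, j < m)
     ((@enum_val _ (mem (rcosets P G)) j ==
       @enum_val _ (mem (rcosets P G)) i :* x)%g%:R).

Lemma ind1_mx_repr : mx_repr G ind1_mx.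
Proof.
split.
  apply/matrixP=> i j; rewrite !mxE rcoset1.
  by rewrite (inj_eq enum_val_inj) eq_sym.
move=> x y Gx Gy; apply/matrixP=> i k; rewrite !mxE.
have Hix : (enum_val i :* x)%g \in rcosets P G.
  have /rcosetsP[g Gg eig] := enum_valP i.
  by apply/rcosetsP; exists (g * x)%g; rewrite ?groupM // eig rcosetM.
rewrite (bigD1 (enum_rank_in Hix (enum_val i :* x)%g)) //= !mxE.
rewrite !enum_rankK_in // eqxx mul1r rcosetM big1 ?addr0 // => j nj.
rewrite !mxE; case: eqP => [ej|]; last by rewrite mul0r.
by case/eqP: nj; apply: enum_val_inj; rewrite enum_rankK_in // ej.
Qed.

Definition ind1_repr : mx_representation F G m := MxRepresentation ind1_mx_repr.
End Ind.

Definition uniserial (G : {group gT}) n (rG : mx_representation F G n) :=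
  forall U V : 'M[F]_n, mxmodule rG U -> mxmodule rG V ->
    (U <= V)%MS \/ (V <= U)%MS.

End Defs.

(* Main.v *)
Require Import Defs.
From HB Require Import structures.
From mathcomp Require Import all_boot all_order all_algebra all_fingroup all_solvable all_field all_character.
From mathcomp Require Import zify.
Set Implicit Arguments. Unset Strict Implicit. Unset Printing Implicit Defensive.
Import GRing.Theory.
Local Open Scope ring_scope.

Lemma subB_sub (F : fieldType) m1 m2 n (A B : 'M[F]_(m1, n)) (C : 'M_(m2, n)) :
  (A <= C)%MS -> (B <= C)%MS -> (A - B <= C)%MS.
Proof. by move=> sA sB; apply: addmx_sub => //; rewrite eqmx_opp. Qed.

Section Gen.
Variables (F : fieldType) (gT : finGroupType) (G : {group gT}).

Lemma rsim_triv_id n (r : mx_representation F G n) :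
  mx_rsim r (triv_repr F G) -> forall x, x \in G -> r x = 1%:M.
Proof.
case=> B _ freeB h x Gx; apply: (row_free_inj freeB).
by rewrite h // mulmx1 mul1mx.
Qed.

Lemma rsim_fix n1 n2 (r1 : mx_representation F G n1) (r2 : mx_representation F G n2) (v : 'rV[F]_n1) :
  mx_rsim r1 r2 -> v != 0 -> (forall x, x \in G -> v *m r1 x = v) ->
  exists2 u : 'rV[F]_n2, u != 0 & forall x, x \in G -> u *m r2 x = u.
Proof.
case=> B _ freeB h nzv fv; exists (v *m B).
  apply: contra nzv => /eqP e; apply/eqP; apply: (row_free_inj freeB).
  by rewrite e mul0mx.
by move=> x Gx; rewrite -mulmxA -h // mulmxA fv.
Qed.

Lemma nofix nA (rA : mx_representation F G nA) (v : 'rV[F]_nA) :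
  mx_irreducible rA -> ~ mx_rsim rA (triv_repr F G) -> v != 0 ->
  (forall x, x \in G -> v *m rA x = v) -> False.
Proof.
move=> irrA nsim nzv fv; apply: nsim.
have modv : mxmodule rA v by apply/mxmoduleP=> x Gx; rewrite fv.
have modv' : mxmodule rA <<v>>%MS by rewrite (eqmx_module _ (genmxE v)).
have nzv' : <<v>>%MS != 0 by rewrite -mxrank_eq0 genmxE mxrank_eq0.
have [gt0 /(_ _ modv' nzv') rfv'] := (mx_irrP rA).1 irrA.
have rfv : row_full v by rewrite /row_full -(genmxE v).
have rA1 x : x \in G -> rA x = 1%:M.
  by move=> Gx; apply: (row_full_inj rfv); rewrite fv // mulmx1.
have eqn : nA = 1%N.
  apply/eqP; rewrite eqn_leq -{1}(eqP rfv) rank_leq_row.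
  exact: gt0.
exists v^T => //; first by rewrite /row_free mxrank_tr (eqP rfv).
by move=> x Gx; rewrite rA1 // mul1mx /= mulmx1.
Qed.

Lemma triv_sub n (r : mx_representation F G n) U (modU : mxmodule r U) :
  mx_rsim (submod_repr modU) (triv_repr F G) -> (U <= rfix_mx r G)%MS.
Proof.
move=> sim; apply/rfix_mxP=> x Gx.
rewrite -{1}(in_submodK (U:=U) (submx_refl U)) -(val_submodJ modU) //.
have := rsim_triv_id sim Gx => /= ->.
by rewrite mulmx1 in_submodK.
Qed.

Lemma triv_fact n (r : mx_representation F G n) U (modU : mxmodule r U) (w : 'rV[F]_n) x :
  mx_rsim (section_repr modU (mxmodule1 r)) (triv_repr F G) -> x \in G ->
  (w *m r x - w <= U)%MS.
Proof.
move=> sim Gx.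
have sim' : mx_rsim (factmod_repr modU) (triv_repr F G).
  exact: mx_rsim_trans (mx_rsim_sym (mx_factmod_sub modU)) sim.
rewrite -in_factmod_eq0 linearB /= (in_factmodJ modU) //.
have := rsim_triv_id sim' Gx => /= ->.
by rewrite mulmx1 subrr.
Qed.

End Gen.

Lemma schur (F : closedFieldType) (gT : finGroupType) (L : {group gT}) n
  (r : mx_representation F L n) (Y : 'M[F]_n) :
  mx_irreducible r -> (forall x, x \in L -> Y *m r x = r x *m Y) -> is_scalar_mx Y.
Proof.
move=> irr cY; apply: (mx_abs_irr_cent_scalar (group_closure_closed_field irr)).
exact/centgmxP.
Qed.

Section Main.
Variables (F : closedFieldType) (gT : finGroupType) (G P : {group gT}) (n : nat).
Variable rV : mx_representation F G n.
Hypothesis sPG : P \subset G.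
Local Notation m := #|rcosets P G|.
Local Notation rW := (ind1_repr F G P).

Definition cj (x : gT) (Y : 'M[F]_n) := rV (x^-1)%g *m Y *m rV x.

Lemma cjM x y Y : x \in G -> y \in G -> cj (x * y)%g Y = cj y (cj x Y).
Proof.
move=> Gx Gy; rewrite /cj invMg !repr_mxM ?groupV //.
by rewrite !mulmxA.
Qed.

Lemma cj1 Y : cj 1%g Y = Y.
Proof. by rewrite /cj invg1 repr_mx1 mul1mx mulmx1. Qed.

Definition Tx x : 'M[F]_(n * n) := lin_mulmx (rV (x^-1)%g) *m lin_mulmxr (rV x).

Lemma TxE x Y : mxvec Y *m Tx x = mxvec (cj x Y).
Proof. by rewrite /Tx mulmxA !mul_vec_lin. Qed.

Variable X : 'M[F]_n.
Hypothesis cPX : forall p, p \in P -> X *m rV p = rV p *m X.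

Lemma cjP p g : p \in P -> g \in G -> cj (p * g)%g X = cj g X.
Proof.
move=> Pp Gg; have Gp := subsetP sPG p Pp.
rewrite cjM //; congr cj; rewrite /cj -mulmxA cPX // mulmxA -repr_mxM ?groupV //.
by rewrite mulVg repr_mx1 mul1mx.
Qed.

Definition cos (i : 'I_m) : {set gT} := @enum_val _ (mem (rcosets P G)) i.

Lemma cosP i : exists2 a, a \in G & cos i = (P :* a)%g.
Proof. by have /rcosetsP[a Ga Ea] := enum_valP i; exists a. Qed.

Lemma cj_coset i g : g \in cos i -> g \in G /\ cj g X = cj (repr (cos i)) X.
Proof.
have [a Ga ->] := cosP i => /rcosetP[p Pp ->].
have /rcosetP[q Pq ->] := mem_repr_rcoset P a.
by rewrite groupM ?Ga ?(subsetP sPG p Pp) // !cjP.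
Qed.

Definition phi i := cj (repr (cos i)) X.
Definition M : 'M[F]_(m, n * n) := \matrix_i mxvec (phi i).

Lemma rWE x i j : rW x i j = (cos j == cos i :* x)%g%:R.
Proof. by rewrite /= mxE. Qed.


Lemma repr_cos i : repr (cos i) \in cos i.
Proof. by have [a Ga ->] := cosP i; apply: mem_repr_rcoset. Qed.

Lemma cos_inj : injective cos.
Proof. exact: enum_val_inj. Qed.

Lemma cos_act x i : x \in G -> exists j, cos j = (cos i :* x)%g.
Proof.
move=> Gx; have Hix : (cos i :* x)%g \in rcosets P G.
  have [a Ga ->] := cosP i.
  by apply/rcosetsP; exists (a * x)%g; rewrite ?groupM // rcosetM.
by exists (enum_rank_in Hix (cos i :* x)%g); rewrite /cos enum_rankK_in.
Qed.

Lemma row_rW x i j : cos j = (cos i :* x)%g -> row i (rW x) = delta_mx 0 j.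
Proof.
move=> Ej; apply/rowP=> k; rewrite !mxE -Ej.
by rewrite (inj_eq cos_inj) eqxx /= eq_sym.
Qed.

Lemma ind1E x i j : ind1_mx F G P x i j = (cos j == cos i :* x)%g%:R.
Proof. by rewrite mxE. Qed.

Lemma Mmod x : x \in G -> rW x *m M = M *m Tx x.
Proof.
move=> Gx; apply/row_matrixP=> i; rewrite !row_mul.
have [j Ej] := cos_act i Gx.
rewrite (row_rW Ej) -rowE !rowK TxE /phi.
have : (repr (cos i) * x)%g \in cos j by rewrite Ej mem_mulg ?set11 ?repr_cos.
case/cj_coset=> _ <-; have [Gr _] := cj_coset (repr_cos i).
by rewrite cjM.
Qed.

Definition K := kermx M.

Lemma K_module : mxmodule rW K.
Proof.
apply/mxmoduleP=> x Gx; rewrite sub_kermx -mulmxA Mmod // mulmxA.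
by move/sub_kermxP: (submx_refl K) => ->; rewrite mul0mx.
Qed.


Lemma cj_comm x Y : x \in G -> cj x Y = Y -> Y *m rV x = rV x *m Y.
Proof.
move=> Gx e; rewrite -[in RHS]e /cj !mulmxA -repr_mxM ?groupV // mulgV repr_mx1.
by rewrite mul1mx.
Qed.

Lemma cj_scalar x a : x \in G -> cj x a%:M = a%:M.
Proof.
move=> Gx; rewrite /cj scalar_mxC -mulmxA -repr_mxM ?groupV // mulVg.
by rewrite repr_mx1 mulmx1.
Qed.

Lemma fixM (L : {set gT}) (w : 'rV[F]_m) x :
  L \subset G -> (w <= rfix_mx rW L)%MS -> x \in L ->
  vec_mx (w *m M) *m rV x = rV x *m vec_mx (w *m M).
Proof.
move=> sLG fw Lx; have Gx := subsetP sLG x Lx.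
apply: cj_comm => //; apply: (can_inj mxvecK).
rewrite -TxE vec_mxK -mulmxA -Mmod // mulmxA.
by rewrite (rfix_mxP L fw).
Qed.

Lemma rW_apply (w : 'rV[F]_m) x k j : x \in G -> cos j = (cos k :* x^-1)%g ->
  (w *m rW x) 0 k = w 0 j.
Proof.
move=> Gx Ej; rewrite !mxE (bigD1 j) //= big1 ?addr0.
  by rewrite ind1E Ej -rcosetM mulVg rcoset1 eqxx mulr1.
move=> i nij; rewrite ind1E; case: eqP => [Ei|]; last by rewrite mulr0.
case/eqP: nij; apply: cos_inj; rewrite Ej Ei -rcosetM mulgV rcoset1 //.
Qed.


Lemma P_in : (P : {set gT}) \in rcosets P G.
Proof. by apply/rcosetsP; exists 1%g; rewrite ?group1 ?rcoset1. Qed.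

Definition i0 := enum_rank_in P_in (P : {set gT}).
Lemma cos_i0 : cos i0 = P :> {set gT}.
Proof. by rewrite /cos /i0 enum_rankK_in // P_in. Qed.

Definition e0 : 'rV[F]_m := delta_mx 0 i0.
Lemma e0M : e0 *m M = mxvec X.
Proof.
rewrite /e0 -rowE rowK /phi.
have := @cj_coset i0 1%g; rewrite cos_i0 group1 => /(_ isT) [_ <-].
by rewrite cj1.
Qed.

Definition tv : 'rV[F]_m := const_mx 1.
Lemma tv_fix : (tv <= rfix_mx rW G)%MS.
Proof.
apply/rfix_mxP=> x Gx; apply/rowP=> k.
have [j Ej] := cos_act k (groupVr Gx).
by rewrite (rW_apply _ Gx Ej) !mxE.
Qed.

Lemma tv_neq0 : tv != 0.
Proof. by apply/eqP=> /rowP/(_ i0); rewrite !mxE; apply/eqP; rewrite oner_eq0. Qed.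

Variable H : {group gT}.
Hypothesis sHG : H \subset G.

Lemma PH_mulr z y : y \in H -> (z * y \in P * H)%g = (z \in P * H)%g.
Proof.
have step a b : b \in H -> (a \in P * H)%g -> (a * b \in P * H)%g.
  move=> Hb /mulsgP[p h Pp Hh ->]; rewrite -mulgA mem_mulg ?groupM //.
move=> Hy; apply/idP/idP; last exact: step.
by move/(step _ _ (groupVr Hy)); rewrite mulgK.
Qed.

Lemma cos_PH i a : cos i = (P :* a)%g -> (cos i \subset P * H)%g = (a \in P * H)%g.
Proof.
move=> ->; apply/idP/idP=> [/subsetP sPH|Ha].
  by apply: sPH; apply: rcoset_refl.
apply/subsetP=> z /rcosetP[p Pp ->].
case/mulsgP: Ha => q h Pq Hh ->.
by rewrite mulgA mem_mulg ?groupM.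
Qed.

Definition ov : 'rV[F]_m := \row_i (cos i \subset P * H)%g%:R.

Lemma ov_fix : (ov <= rfix_mx rW H)%MS.
Proof.
apply/rfix_mxP=> h Hh; have Gh := subsetP sHG h Hh; apply/rowP=> k.
have [j Ej] := cos_act k (groupVr Gh).
rewrite (rW_apply _ Gh Ej) !mxE.
have [a Ga Ea] := cosP k.
rewrite (cos_PH Ea) (cos_PH (a := (a * h^-1)%g)) ?PH_mulr ?groupV //.
by rewrite Ej Ea rcosetM.
Qed.


Lemma notPH : (H * P)%g != G :> {set gT} -> exists2 g, g \in G & g \notin (P * H)%g.
Proof.
move=> nHP; case: (boolP [exists g in G, g \notin (P * H)%g]).
  by case/exists_inP=> g Gg ng; exists g.
move/exists_inPn=> all; case/eqP: nHP; apply/eqP.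
rewrite eqEsubset mul_subG //=; apply/subsetP=> g Gg.
have := all _ (groupVr Gg); rewrite negbK => /mulsgP[p h Pp Hh e].
by rewrite -[g]invgK e invMg mem_mulg ?groupV.
Qed.

Lemma ov_i0 : ov 0 i0 = 1.
Proof.
rewrite mxE (cos_PH (a := 1%g)) ?cos_i0 ?rcoset1 //.
by rewrite -[1%g]mulg1 mem_mulg.
Qed.

Lemma ov_neq0 : ov != 0.
Proof. by apply/eqP=> /rowP/(_ i0); rewrite ov_i0 mxE; apply/eqP; rewrite oner_eq0. Qed.

Lemma ov_not_tv : (H * P)%g != G :> {set gT} -> ~~ (ov <= tv)%MS.
Proof.
case/notPH=> g Gg ng; have [j Ej] := cos_act i0 Gg.
rewrite cos_i0 in Ej.
apply/negP=> /submxP[D e].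
have e1 := congr1 (fun v : 'rV_m => v 0 i0) e.
have e2 := congr1 (fun v : 'rV_m => v 0 j) e.
rewrite /= !mxE !big_ord1 !mxE in e1 e2.
have E0 : cos i0 = (P :* 1)%g by rewrite cos_i0 rcoset1.
have one_PH : (1 \in P * H)%g by rewrite -[1%g]mulg1 mem_mulg.
move: e1 e2; rewrite (cos_PH Ej) (negbTE ng) (cos_PH E0) one_PH.
by move=> <- /esym/eqP /=; rewrite oner_eq0.
Qed.

Hypothesis irrH : mx_irreducible (subg_repr rV sHG).

Lemma keyZ (w : 'rV[F]_m) x : (w <= rfix_mx rW H)%MS -> x \in G ->
  (w *m rW x - w <= K)%MS.
Proof.
move=> fw Gx.
have /is_scalar_mxP[a ea] : is_scalar_mx (vec_mx (w *m M)).
  by apply: (schur irrH) => h Hh; exact: fixM sHG fw Hh.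
rewrite sub_kermx mulmxBl -mulmxA Mmod // mulmxA -(vec_mxK (w *m M)) ea.
by rewrite TxE cj_scalar // subrr.
Qed.

Hypothesis irrV : mx_irreducible rV.

Lemma X_scalar : (forall x, x \in G -> (e0 *m rW x - e0 <= K)%MS) -> is_scalar_mx X.
Proof.
move=> hK; apply: (schur irrV) => x Gx; apply: cj_comm => //.
apply: (can_inj mxvecK); rewrite -TxE -e0M -mulmxA -Mmod // mulmxA.
by apply/eqP; rewrite -subr_eq0 -mulmxBl -sub_kermx hK.
Qed.


Lemma case1 nA (rA : mx_representation F G nA) (U1 U2 : 'M[F]_m)
    (modU1 : mxmodule rW U1) (modU2 : mxmodule rW U2) :
  mx_irreducible rA -> ~ mx_rsim rA (triv_repr F G) ->
  mxdirect (U1 + U2) -> (U1 + U2 :=: 1%:M)%MS ->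
  mx_rsim (submod_repr modU1) (triv_repr F G) -> mx_rsim (submod_repr modU2) rA ->
  (H * P)%g != G :> {set gT} ->
  forall x, x \in G -> (e0 *m rW x - e0 <= K)%MS.
Proof.
move=> irrA nsim dU eU sim1 sim2 nHP.
have simU2 : mxsimple rW U2.
  exact/(submod_mx_irr modU2)/(mx_rsim_irr (mx_rsim_sym sim2)).
have nofixU2 (y : 'rV[F]_m) : (y <= U2)%MS -> y != 0 ->
    (forall x, x \in G -> y *m rW x = y) -> False.
  move=> yU2 nzy fy.
  have nz : in_submod U2 y != 0.
    apply: contra nzy => /eqP e; apply/eqP.
    by rewrite -(in_submodK yU2) e linear0.
  have fx x : x \in G -> in_submod U2 y *m submod_repr modU2 x = in_submod U2 y.
    by move=> Gx; rewrite /= -(in_submodJ modU2) // fy.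
  have [u nzu fu] := rsim_fix sim2 nz fx.
  exact: nofix irrA nsim nzu fu.
have U1fix := triv_sub sim1.
have rU1 : \rank U1 = 1%N by have := mxrank_rsim sim1.
have sU2K : (U2 <= K)%MS.
  apply/negPn/negP=> nU2K.
  have capK0 (z : 'rV[F]_m) : (z <= K)%MS -> (z <= U2)%MS -> z = 0.
    move=> zK zU2; have [_ _ minU2] := simU2.
    have mod_cap := capmx_module K_module modU2.
    case: (eqVneq (K :&: U2)%MS 0) => [e|nz].
      by apply/eqP; rewrite -submx0 -e sub_capmx zK.
    by case/negP: nU2K; apply: submx_trans (minU2 _ mod_cap (capmxSr _ _) nz) _;
      rewrite capmxSl.
  set B := (ov + tv)%MS.
  have rB : \rank B = 2.
    have := mxrank_sum_cap ov tv; rewrite !rank_rV ov_neq0 tv_neq0 -/B.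
    suff -> : \rank (ov :&: tv)%MS = 0%N by rewrite addn0.
    apply/eqP; rewrite mxrank_eq0; apply/negP=> /negP nz.
    case/negP: (ov_not_tv nHP).
    have r1 : \rank (ov :&: tv)%MS = 1%N.
      have := mxrankS (capmxSl ov tv); rewrite rank_rV ov_neq0.
      by rewrite -mxrank_eq0 in nz; move: nz; case: (\rank _) => [|[]].
    have: (ov <= ov :&: tv)%MS.
      by rewrite -(mxrank_leqif_sup (capmxSl ov tv)).2 r1 rank_rV ov_neq0.
    by move/submx_trans; apply; rewrite capmxSr.
  have rU2 : (\rank U2 + 1 = m)%N.
    have := mxrank_sum_cap U1 U2; rewrite eU mxrank1 rU1.
    by move/mxdirect_addsP: dU => ->; rewrite mxrank0 addn0 addnC.
  have rBU : (0 < \rank (B :&: U2))%N.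
    have := mxrank_sum_cap B U2; rewrite rB.
    have := rank_leq_col (B + U2)%MS; lia.
  set y := nz_row (B :&: U2)%MS.
  have nzy : y != 0 by rewrite nz_row_eq0 -mxrank_eq0 -lt0n.
  have yB : (y <= B)%MS by apply: submx_trans (nz_row_sub _) (capmxSl _ _).
  have yU2 : (y <= U2)%MS by apply: submx_trans (nz_row_sub _) (capmxSr _ _).
  have yH : (y <= rfix_mx rW H)%MS.
    apply: submx_trans yB _; rewrite addsmx_sub ov_fix /=.
    by apply: submx_trans tv_fix (rfix_mxS _ sHG).
  apply (nofixU2 y yU2 nzy) => x Gx; apply/eqP; rewrite -subr_eq0; apply/eqP.
  apply: capK0; first exact: (keyZ yH Gx).
  exact: (subB_sub (submx_trans (submxMr _ yU2) (mxmoduleP modU2 x Gx)) yU2).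
move=> x Gx; apply: submx_trans sU2K.
have : (e0 <= U1 + U2)%MS by rewrite eU submx1.
case/sub_addsmxP=> u ->; rewrite mulmxDl addrAC.
rewrite (rfix_mxP G (submx_trans (submxMl _ _) U1fix)) //.
rewrite opprD addrA subrr add0r addrC.
apply: subB_sub; last exact: submxMl.
exact: submx_trans (submxMr _ (submxMl _ _)) (mxmoduleP modU2 x Gx).
Qed.


Lemma case2 nA (rA : mx_representation F G nA) (U1 U2 : 'M[F]_m)
    (modU1 : mxmodule rW U1) (modU2 : mxmodule rW U2) :
  mx_irreducible rA -> ~ mx_rsim rA (triv_repr F G) ->
  uniserial rW -> (U1 <= U2)%MS ->
  mx_rsim (submod_repr modU1) (triv_repr F G) ->
  mx_rsim (section_repr modU1 modU2) rA ->
  mx_rsim (section_repr modU2 (mxmodule1 rW)) (triv_repr F G) ->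
  (H * P)%g != G :> {set gT} ->
  forall x, x \in G -> (e0 *m rW x - e0 <= K)%MS.
Proof.
move=> irrA nsim uni sU12 sim1 simS simT nHP.
have maxU : max_submod rW U1 U2.
  exact/(max_submodP modU1 modU2 sU12)/(mx_rsim_irr (mx_rsim_sym simS)).
have U1fix := triv_sub sim1.
have rU1 : \rank U1 = 1%N by have := mxrank_rsim sim1.
have tU1 : (tv <= U1)%MS.
  have modt : mxmodule rW <<tv>>%MS.
    rewrite (eqmx_module _ (genmxE tv)); apply/mxmoduleP=> x Gx.
    by rewrite (rfix_mxP G tv_fix).
  case: (uni _ _ modt modU1); first by rewrite genmxE.
  move=> sU1t; rewrite -(genmxE tv).
  by rewrite -(mxrank_leqif_sup sU1t).2 genmxE rank_rV tv_neq0 rU1.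
have U1t : (U1 <= tv)%MS.
  by rewrite -(mxrank_leqif_sup tU1).2 rank_rV tv_neq0 rU1.
have oU1 : ~~ (ov <= U1)%MS.
  by apply: contra (ov_not_tv nHP) => /submx_trans; apply.
have sU2K : (U2 <= K)%MS.
  apply/negPn/negP=> nU2K.
  have sKU2 : (K <= U2)%MS by case: (uni _ _ K_module modU2) => // sUK; rewrite sUK in nU2K.
  have sKU1 : (K <= U1)%MS.
    case: (uni _ _ K_module modU1) => // sU1K.
    apply/negPn/negP => nKU1; apply: (maxU.2 K); split=> //.
      exact: K_module.
    - by rewrite ltmxE sU1K.
    - by rewrite ltmxE sKU2.
  have ovx x : x \in G -> (ov *m rW x - ov <= U1)%MS.
    move=> Gx; apply: submx_trans sKU1; apply: keyZ Gx.
    exact: ov_fix.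
  pose N := (U1 + ov)%MS.
  have modN : mxmodule rW N.
    apply/mxmoduleP=> x Gx; rewrite addsmxMr addsmx_sub.
    rewrite (submx_trans (mxmoduleP modU1 x Gx) (addsmxSl _ _)) /=.
    rewrite -[ov *m _](subrK ov) /N.
    by apply: addmx_sub_adds; [apply: ovx|].
  have oU2 : (ov <= U2)%MS.
    case: (uni _ _ modN modU2) => [sNU2|sU2N].
      exact: submx_trans (addsmxSr _ _) sNU2.
    have rN : (\rank N <= 2)%N.
      by have := (mxrank_adds_leqif U1 ov).1; rewrite rU1 rank_rV ov_neq0.
    have rU2 : (1 < \rank U2)%N.
      by have := maxU.1; rewrite ltmxErank rU1 => /andP[].
    have sNU2 : (N <= U2)%MS.
      rewrite -(mxrank_leqif_sup sU2N).2 eqn_leq mxrankS //=.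
      exact: leq_trans rN rU2.
    exact: submx_trans (addsmxSr _ _) sNU2.
  set S := <<in_factmod U1 U2>>%MS.
  have oS : (in_factmod U1 ov <= S)%MS.
    by rewrite genmxE [in_factmod U1 ov]in_factmodE [in_factmod U1 U2]in_factmodE submxMr.
  set v := in_submod S (in_factmod U1 ov).
  have nzv : v != 0.
    apply: contra oU1 => /eqP e; rewrite -in_factmod_eq0.
    by rewrite -(in_submodK oS) -/v e linear0.
  have fv x : x \in G -> v *m section_repr modU1 modU2 x = v.
    move=> Gx; rewrite /= -(in_submodJ (section_module modU1 modU2)) //.
    rewrite -(in_factmodJ modU1) //; congr (in_submod S _).
    apply/eqP; rewrite -subr_eq0 -linearB /= in_factmod_eq0; exact: ovx.
  have [u nzu fu] := rsim_fix simS nzv fv.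
  exact: nofix irrA nsim nzu fu.
move=> x Gx; apply: submx_trans sU2K.
exact: triv_fact simT Gx.
Qed.

End Main.

Theorem lemma3p1 (F : closedFieldType) (gT : finGroupType) (G P : {group gT})
    (n : nat) (rV : mx_representation F G n)
    (irrV : mx_irreducible rV)
    (ltPG : P \proper G)
    (hEnd : (2 <= \rank 'C(enveloping_algebra_mx
                              (subg_repr rV (proper_sub ltPG)))%MS)%N)
    (hW : let rW := ind1_repr F G P in
          exists nA (rA : mx_representation F G nA),
            [/\ mx_irreducible rA, ~ mx_rsim rA (triv_repr F G) &
              (* W = 1_G (+) A *)
              (exists U1 U2 (modU1 : mxmodule rW U1) (modU2 : mxmodule rW U2),
                 [/\ mxdirect (U1 + U2), (U1 + U2 :=: 1%:M)%MS,
                     mx_rsim (submod_repr modU1) (triv_repr F G) &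
                     mx_rsim (submod_repr modU2) rA])
              \/
              (* W uniserial with composition factors 1_G, A, 1_G (top to bottom) *)
              (uniserial rW /\
               exists U1 U2 (modU1 : mxmodule rW U1) (modU2 : mxmodule rW U2),
                 [/\ (U1 <= U2)%MS,
                     mx_rsim (submod_repr modU1) (triv_repr F G),
                     mx_rsim (section_repr modU1 modU2) rA &
                     mx_rsim (section_repr modU2 (mxmodule1 rW)) (triv_repr F G)])]) :
  forall (H : {group gT}) (sHG : H \subset G),
    (H * P)%g = G :> {set gT} \/ ~ mx_irreducible (subg_repr rV sHG).
Proof.
move=> H sHG.
case: (eqVneq (H * P)%g (G : {set gT})) => [e|nHP]; [by left | right => irrH].
have sPG := proper_sub ltPG.
move: hEnd => /(has_non_scalar_mxP (scalar_mx_cent _ _)) [X cX nsX].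
rewrite memmx_cent_envelop in cX.
have cPX : forall p, p \in P -> X *m rV p = rV p *m X.
  by move=> p Pp; have /centgmxP := cX; apply.
case/negP: nsX; apply: (X_scalar sPG cPX irrV).
case: hW => nA [rA [irrA nsim [[U1 [U2 [modU1 [modU2 [dU eU s1 s2]]]]] |
  [uni [U1 [U2 [modU1 [modU2 [s12 s1 sS sT]]]]]]]]].
  exact: (case1 sPG cPX irrH irrA nsim dU eU s1 s2 nHP).
exact: (case2 sPG cPX irrH irrA nsim uni s12 s1 sS sT nHP).
Qed.
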